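(* Let $E/F$ be an unramified quadratic extension of nonarchimedean local fields of characteristic $0$ and $\beta\in\mathrm{GL}_n(E)$ skew-Hermitian. Let $\gamma\in\mathrm{GL}_n(E)$ be normal and Kottwitz with $\bar\gamma\gamma$ regular semisimple, and let $\zeta\in\mathrm{GL}_n(E)$ be Kottwitz with respect to $\beta$. Then: (1) if $g\in\mathrm{GL}_n(E)$ and $g^{-1}\bar\gamma\gamma g\in\mathrm{GL}_n(\mathcal{O}_E)$, then $g^{-1}\gamma g\in\mathrm{GL}_n(\mathcal{O}_E)$; (2) if $g\in\mathrm{GL}_n(E)$ and $g^{-1}\gamma\bar g\in\mathrm{GL}_n(\mathcal{O}_E)$, then $g\in\mathrm{GL}_n(F)\mathrm{GL}_n(\mathcal{O}_E)$; (3) if $h\in\mathrm{U}_n^\beta(F)$ and $h^{-1}(\beta^{-1}\zeta^*\beta\zeta)h\in\mathrm{GL}_n(\mathcal{O}_E)$, then $h^{-1}\zeta h\in\mathrm{GL}_n(\mathcal{O}_E)$.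
   Context: $x\mapsto\bar x$ is the nontrivial automorphism of $E/F$ (applied entrywise), $g^*={}^t\bar g$; skew-Hermitian means $\beta^*=-\beta$, and $\mathrm{U}_n^\beta(F)=\{h\in\mathrm{GL}_n(E):h^*\beta h=\beta\}$. $\gamma$ is normal if $\bar\gamma\gamma\in\mathrm{GL}_n(F)$. $\gamma$ is Kottwitz if either $\gamma=c_{n-1}(\bar\gamma\gamma)^{n-1}+\dots+c_0$ for some $c_i\in\mathcal{O}_E$, or there is no $g\in\mathrm{GL}_n(E)$ with $g^{-1}\bar\gamma\gamma g\in\mathrm{GL}_n(\mathcal{O}_E)$. $\zeta$ is Kottwitz with respect to $\beta$ if either $\zeta=c_{n-1}(\beta^{-1}\zeta^*\beta\zeta)^{n-1}+\dots+c_0$ for some $c_i\in\mathcal{O}_E$, or there is no $h\in\mathrm{U}_n^\beta(F)$ with $h^{-1}(\beta^{-1}\zeta^*\beta\zeta)h\in\mathrm{GL}_n(\mathcal{O}_E)$. *)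

(* Defs.v *)
From HB Require Import structures.
From mathcomp Require Import all_boot all_order all_algebra all_field.
Set Implicit Arguments. Unset Strict Implicit. Unset Printing Implicit Defensive.
Import Order.TTheory GRing.Theory Num.Theory.
Local Open Scope ring_scope.

(* A field E with a (normalized, discrete) valuation v : E^x -> Z; v 0 is
   irrelevant (junk).  [vge v N x] means "x = 0 or v x >= N". *)
Definition vge (E : fieldType) (v : E -> int) (N : int) (x : E) : bool :=
  (x == 0) || (N <= v x).

Definition intO (E : fieldType) (v : E -> int) (x : E) : bool := vge v 0 x.

(* E is a nonarchimedean local field of characteristic 0 (complete w.r.t. the
   discrete valuation v, finite residue field), sigma is an automorphism of
   order 2 of E (so E/F is quadratic with F = fixed field of sigma), and the
   extension E/F is unramified: F contains a uniformizer of E. *)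
Definition unram_quad_local (E : fieldType) (sigma : {rmorphism E -> E})
    (v : E -> int) : Prop :=
  [/\
      [pchar E] =i pred0,
      (forall x y, x != 0 -> y != 0 -> v (x * y) = v x + v y),
      (forall x y, x != 0 -> y != 0 -> x + y != 0 ->
         (v x <= v (x + y)) || (v y <= v (x + y))),
      (forall u : nat -> E,
         (forall N : int, exists M : nat, forall m k : nat,
            (M <= m)%N -> (M <= k)%N -> vge v N (u m - u k)) ->
         exists l : E, forall N : int, exists M : nat, forall m : nat,
            (M <= m)%N -> vge v N (u m - l)) &
      (exists s : seq E, forall x, intO v x ->
         exists2 y, y \in s & intO v y && vge v 1 (x - y))] /\
   [/\
      (forall x, sigma (sigma x) = x),
      (exists x, sigma x != x),
      (forall x, v (sigma x) = v x) &
      (exists pi : E, [/\ pi != 0, v pi = 1 & sigma pi = pi])].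

Section Mx.
Variables (E : fieldType) (sigma : {rmorphism E -> E}) (v : E -> int) (n : nat).

Definition mxbar (A : 'M[E]_n) : 'M[E]_n := map_mx sigma A.
Definition mxadj (A : 'M[E]_n) : 'M[E]_n := (map_mx sigma A)^T.

Definition mxO (A : 'M[E]_n) : bool := [forall i, forall j, intO v (A i j)].

Definition GLO (A : 'M[E]_n) : bool :=
  [&& A \in unitmx, mxO A & mxO (invmx A)].

Definition GLF (A : 'M[E]_n) : bool := (A \in unitmx) && (mxbar A == A).

Definition mxpow (A : 'M[E]_n) (i : nat) : 'M[E]_n := iter i (mulmx A) 1%:M.

Definition normal_mx (g : 'M[E]_n) : Prop := GLF (mxbar g *m g).

Definition regular_semisimple (A : 'M[E]_n) : Prop :=
  separable_poly (char_poly A).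

Definition kottwitz (g : 'M[E]_n) : Prop :=
  let M := mxbar g *m g in
  (exists c : 'I_n -> E, (forall i, intO v (c i)) /\
       g = \sum_(i < n) c i *: mxpow M i)
  \/ ~ (exists h : 'M[E]_n, h \in unitmx /\ GLO (invmx h *m M *m h)).

Definition unitary_grp (beta h : 'M[E]_n) : bool :=
  (h \in unitmx) && (mxadj h *m beta *m h == beta).

Definition kottwitz_wrt (beta z : 'M[E]_n) : Prop :=
  let M := invmx beta *m mxadj z *m beta *m z in
  (exists c : 'I_n -> E, (forall i, intO v (c i)) /\
       z = \sum_(i < n) c i *: mxpow M i)
  \/ ~ (exists h : 'M[E]_n, unitary_grp beta h /\ GLO (invmx h *m M *m h)).

End Mx.

(* Main.v *)
Require Import Defs.
From HB Require Import structures.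
From mathcomp Require Import all_boot all_order all_algebra all_field.
From mathcomp Require Import zify ring lra.
From Stdlib Require Import Classical_Prop.
Import Order.TTheory GRing.Theory Num.Theory.
Set Implicit Arguments. Unset Strict Implicit. Unset Printing Implicit Defensive.
Local Open Scope ring_scope.

Section Val.
Variables (E : fieldType) (v : E -> int).
Hypothesis Hmul : forall x y : E, x != 0 -> y != 0 -> v (x * y) = v x + v y.
Hypothesis Hadd : forall x y : E, x != 0 -> y != 0 -> x + y != 0 ->
         (v x <= v (x + y)) || (v y <= v (x + y)).

Lemma int_aux (a : int) : a = a + a -> a = 0. Proof. lia. Qed.
Lemma int_aux2 (a : int) : 0 = a + a -> a = 0. Proof. lia. Qed.
Lemma int_aux3 (a b : int) : 0 = a + b -> b = - a. Proof. lia. Qed.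

Lemma v1 : v 1 = 0.
Proof. have := Hmul (oner_neq0 E) (oner_neq0 E). rewrite mulr1 => h. exact: int_aux. Qed.

Lemma vN1 : v (-1) = 0.
Proof.
have h : (-1 : E) != 0 by rewrite oppr_eq0 oner_neq0.
have := Hmul h h. rewrite mulrNN mulr1 v1 => h2. exact: int_aux2.
Qed.

Lemma vN x : v (- x) = v x.
Proof.
have [->|x0] := eqVneq x 0; first by rewrite oppr0.
have h : (-1 : E) != 0 by rewrite oppr_eq0 oner_neq0.
by rewrite -mulN1r (Hmul h x0) // vN1 add0r.
Qed.

Lemma vV x : x != 0 -> v x^-1 = - v x.
Proof.
move=> x0. have xi : x^-1 != 0 by rewrite invr_eq0.
have := Hmul x0 xi. rewrite mulfV // v1 => h. exact: int_aux3.
Qed.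

Lemma vge0 N : vge v N 0. Proof. by rewrite /vge eqxx. Qed.

Lemma vgeD N x y : vge v N x -> vge v N y -> vge v N (x + y).
Proof.
rewrite /vge; case: eqP => [->|/eqP x0] /=; first by rewrite add0r.
case: eqP => [->|/eqP y0] /=; first by rewrite addr0 => ->; rewrite orbT.
move=> hx hy.
have [->|xy0] := eqVneq (x + y) 0; first by [].
apply/orP; right.
case/orP: (Hadd x0 y0 xy0) => h; [exact: le_trans hx h | exact: le_trans hy h].
Qed.

Lemma vgeN N x : vge v N (- x) = vge v N x.
Proof. by rewrite /vge oppr_eq0 vN. Qed.

Lemma vgeB N x y : vge v N x -> vge v N y -> vge v N (x - y).
Proof. by move=> hx hy; apply: vgeD => //; rewrite vgeN. Qed.

Lemma vgeM N M x y : vge v N x -> vge v M y -> vge v (N + M) (x * y).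
Proof.
rewrite /vge; case: eqP => [->|/eqP x0] /=; first by rewrite mul0r eqxx.
case: eqP => [->|/eqP y0] /=; first by rewrite mulr0 eqxx.
move=> hx hy. rewrite mulf_eq0 (negPf x0) (negPf y0) /= (Hmul x0 y0). exact: lerD.
Qed.

Lemma vge_le N M x : M <= N -> vge v N x -> vge v M x.
Proof. rewrite /vge => h /orP [->//|h2]. by rewrite (le_trans h h2) orbT. Qed.

Lemma vge1 : vge v 0 1. Proof. by rewrite /vge v1 lexx orbT. Qed.

Lemma vge_exp N x k : (0 <= N) -> vge v N x -> vge v (N * k%:Z) (x ^+ k).
Proof.
move=> N0 hx; elim: k => [|k IH]; first by rewrite mulr0 expr0 vge1.
rewrite exprS. have -> : N * k.+1%:Z = N + N * k%:Z by lia.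
exact: vgeM.
Qed.

Lemma vge_nat k : vge v 0 k%:R.
Proof.
elim: k => [|k IH]; first exact: vge0.
by rewrite -addn1 natrD; apply: vgeD => //; exact: vge1.
Qed.

Lemma vge_muln N x k : vge v N x -> vge v N (x *+ k).
Proof. move=> h; rewrite -mulr_natr -(addr0 N); apply: vgeM => //; exact: vge_nat. Qed.

Lemma vge_sum N (I : Type) (r : seq I) (P : pred I) (F : I -> E) :
  (forall i, P i -> vge v N (F i)) -> vge v N (\sum_(i <- r | P i) F i).
Proof. move=> h; apply: (big_ind (vge v N)) => //; [exact: vge0 | exact: vgeD]. Qed.

Lemma vge_prod (I : Type) (r : seq I) (P : pred I) (F : I -> E) :
  (forall i, P i -> vge v 0 (F i)) -> vge v 0 (\prod_(i <- r | P i) F i).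
Proof.
move=> h; apply: (big_ind (vge v 0)) => //; first exact: vge1.
by move=> x y hx hy; rewrite -(addr0 0); apply: vgeM.
Qed.

Definition unitE (x : E) := (x != 0) && (v x == 0).

Lemma mxOP n (A : 'M[E]_n) : reflect (forall i j, vge v 0 (A i j)) (mxO v A).
Proof.
apply: (iffP forallP) => [h i j|h i]; first by have /forallP := h i; apply.
by apply/forallP => j; apply: h.
Qed.

Lemma mxO_mul n (A B : 'M[E]_n) : mxO v A -> mxO v B -> mxO v (A *m B).
Proof.
move=> /mxOP hA /mxOP hB; apply/mxOP => i j; rewrite mxE.
apply: vge_sum => // k _; rewrite -(addr0 0); exact: vgeM.
Qed.

Lemma mxO_add n (A B : 'M[E]_n) : mxO v A -> mxO v B -> mxO v (A + B).
Proof.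
move=> /mxOP hA /mxOP hB; apply/mxOP => i j; rewrite mxE; exact: vgeD.
Qed.

Lemma mxO_scale n c (A : 'M[E]_n) : vge v 0 c -> mxO v A -> mxO v (c *: A).
Proof.
move=> hc /mxOP hA; apply/mxOP => i j; rewrite mxE -(addr0 0); exact: vgeM.
Qed.

Lemma mxO_scalar n c : vge v 0 c -> mxO v (c%:M : 'M[E]_n).
Proof.
move=> hc; apply/mxOP => i j; rewrite mxE; case: (i == j) => /=.
  by rewrite mulr1n. by rewrite mulr0n vge0.
Qed.

Lemma mxO1 n : mxO v (1%:M : 'M[E]_n).
Proof. apply: mxO_scalar; exact: vge1. Qed.

Lemma mxO_pow n (A : 'M[E]_n) i : mxO v A -> mxO v (mxpow A i).
Proof.
move=> hA; elim: i => [|i IH] /=; first exact: mxO1.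
exact: mxO_mul.
Qed.

Lemma mxO_sum n m (F : 'I_m -> 'M[E]_n) :
  (forall i, mxO v (F i)) -> mxO v (\sum_(i < m) F i).
Proof.
move=> h; apply: (big_ind (fun M : 'M[E]_n => mxO v M)) => //; last by move=> *; exact: mxO_add.
by apply/mxOP => i j; rewrite mxE vge0.
Qed.

Lemma vge_sign (b : bool) : vge v 0 ((-1 : E) ^+ b).
Proof. case: b; rewrite ?expr0 ?expr1 ?vgeN; exact: vge1. Qed.

Lemma mxO_det n (A : 'M[E]_n) : mxO v A -> vge v 0 (\det A).
Proof.
move=> /mxOP hA; rewrite /determinant.
apply: vge_sum => s _; rewrite -(addr0 0); apply: vgeM; first exact: vge_sign.
by apply: vge_prod => i _; apply: hA.
Qed.

Lemma mxO_adj n (A : 'M[E]_n) : mxO v A -> mxO v (\adj A).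
Proof.
move=> /mxOP hA; apply/mxOP => i j; rewrite mxE expand_cofactor.
apply: vge_sum => s _; rewrite -(addr0 0); apply: vgeM; first exact: vge_sign.
by apply: vge_prod => k _; apply: hA.
Qed.

Lemma unitE_mul x y : unitE x -> unitE y -> unitE (x * y).
Proof.
case/andP=> x0 /eqP vx; case/andP => y0 /eqP vy.
by rewrite /unitE mulf_eq0 negb_or x0 y0 /= (Hmul x0 y0) vx vy.
Qed.

Lemma unitE_inv x : unitE x -> unitE x^-1.
Proof.
case/andP=> x0 /eqP vx; by rewrite /unitE invr_eq0 x0 (vV x0) vx.
Qed.

Lemma vge_unit x : unitE x -> vge v 0 x.
Proof. by case/andP => _ /eqP vx; rewrite /vge vx lexx orbT. Qed.

Lemma GLO_det n (A : 'M[E]_n) : GLO v A = mxO v A && unitE (\det A).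
Proof.
apply/idP/idP.
  case/and3P => hu hA hAi; rewrite hA /=.
  have d0 : \det A != 0 by rewrite -unitfE -unitmxE.
  have h1 := mxO_det hA; have h2 := mxO_det hAi.
  rewrite det_inv in h2.
  rewrite /vge (negPf d0) /= in h1; rewrite /vge invr_eq0 (negPf d0) /= (vV d0) in h2.
  rewrite /unitE d0 /= eq_le h1 andbT. by rewrite oppr_ge0 in h2.
case/andP => hA hd; have d0 : \det A != 0 by case/andP: hd.
have hu : A \in unitmx by rewrite unitmxE unitfE.
rewrite /GLO hu hA /= /invmx hu; apply: mxO_scale; last exact: mxO_adj.
by apply: vge_unit; apply: unitE_inv.
Qed.

Lemma GLO_mul n (A B : 'M[E]_n) : GLO v A -> GLO v B -> GLO v (A *m B).
Proof.
rewrite !GLO_det => /andP [hA dA] /andP [hB dB].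
by rewrite mxO_mul //= det_mulmx unitE_mul.
Qed.

Lemma GLO_inv n (A : 'M[E]_n) : GLO v A -> GLO v (invmx A).
Proof.
move=> h; have := h; case/and3P => hu hA hAi.
by rewrite /GLO unitmx_inv hu hAi invmxK hA.
Qed.

Variable (sigma : {rmorphism E -> E}).
Hypothesis Hss : forall x, sigma (sigma x) = x.
Hypothesis Hvs : forall x, v (sigma x) = v x.

Lemma vge_sigma N x : vge v N (sigma x) = vge v N x.
Proof. by rewrite /vge fmorph_eq0 Hvs. Qed.

Lemma unitE_sigma x : unitE (sigma x) = unitE x.
Proof. by rewrite /unitE fmorph_eq0 Hvs. Qed.

Lemma mxbarK n (A : 'M[E]_n) : mxbar sigma (mxbar sigma A) = A.
Proof. by apply/matrixP => i j; rewrite !mxE Hss. Qed.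

Lemma mxbarM n (A B : 'M[E]_n) : mxbar sigma (A *m B) = mxbar sigma A *m mxbar sigma B.
Proof. exact: map_mxM. Qed.

Lemma mxbarV n (A : 'M[E]_n) : mxbar sigma (invmx A) = invmx (mxbar sigma A).
Proof. exact: map_invmx. Qed.

Lemma det_mxbar n (A : 'M[E]_n) : \det (mxbar sigma A) = sigma (\det A).
Proof. exact: det_map_mx. Qed.

Lemma unitmx_bar n (A : 'M[E]_n) : (mxbar sigma A \in unitmx) = (A \in unitmx).
Proof. by rewrite !unitmxE !unitfE det_mxbar fmorph_eq0. Qed.

Lemma mxO_bar n (A : 'M[E]_n) : mxO v (mxbar sigma A) = mxO v A.
Proof.
apply/mxOP/mxOP => h i j; first by have := h i j; rewrite /mxbar mxE vge_sigma.
by rewrite /mxbar mxE vge_sigma.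
Qed.

Lemma GLO_bar n (A : 'M[E]_n) : GLO v (mxbar sigma A) = GLO v A.
Proof. by rewrite !GLO_det mxO_bar det_mxbar unitE_sigma. Qed.

Lemma conj_pow n (g M : 'M[E]_n) i : g \in unitmx ->
  invmx g *m mxpow M i *m g = mxpow (invmx g *m M *m g) i.
Proof.
move=> gu; elim: i => [|i IH] /=; first by rewrite mulmx1 mulVmx.
by rewrite -IH !mulmxA mulmxK.
Qed.

Lemma kott_conj n (M Z g : 'M[E]_n) (c : 'I_n -> E) :
  (forall i, intO v (c i)) -> Z = \sum_(i < n) c i *: mxpow M i ->
  g \in unitmx -> GLO v (invmx g *m M *m g) -> unitE (\det Z) ->
  GLO v (invmx g *m Z *m g).
Proof.
move=> hc -> gu hM hd; rewrite GLO_det; apply/andP; split; last first.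
  rewrite !det_mulmx det_inv mulrC mulrA mulfV ?mul1r //.
  by rewrite -unitfE -unitmxE.
rewrite mulmx_sumr mulmx_suml; apply: mxO_sum => i.
rewrite -scalemxAr -scalemxAl; apply: mxO_scale; first exact: hc.
rewrite conj_pow //; apply: mxO_pow; by case/and3P: hM.
Qed.


Lemma unitE_det_conj n (g A : 'M[E]_n) : g \in unitmx ->
  \det (invmx g *m A *m g) = \det A.
Proof.
move=> gu; rewrite !det_mulmx det_inv mulrC mulrA mulfV ?mul1r //.
by rewrite -unitfE -unitmxE.
Qed.

Lemma unitE_half d : d != 0 -> unitE (sigma d * d) -> unitE d.
Proof.
move=> d0 /andP [_ /eqP h]; rewrite /unitE d0 /=.
have sd0 : sigma d != 0 by rewrite fmorph_eq0.
rewrite (Hmul sd0 d0) Hvs in h. by apply/eqP; apply: int_aux2.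
Qed.

Lemma part1 n (gamma : 'M[E]_n) : gamma \in unitmx -> kottwitz sigma v gamma ->
  forall g : 'M[E]_n, g \in unitmx ->
     GLO v (invmx g *m (mxbar sigma gamma *m gamma) *m g) ->
     GLO v (invmx g *m gamma *m g).
Proof.
move=> gu hk g g0 hM; case: hk => [[c [hc hz]]|hno]; last first.
  by exfalso; apply: hno; exists g.
apply: (kott_conj hc hz g0 hM).
have d0 : \det gamma != 0 by rewrite -unitfE -unitmxE.
apply: unitE_half => //.
move: hM; rewrite GLO_det unitE_det_conj // det_mulmx det_mxbar.
by case/andP.
Qed.

Lemma part3 n (beta zeta : 'M[E]_n) : beta \in unitmx -> zeta \in unitmx ->
  kottwitz_wrt sigma v beta zeta ->
  forall h : 'M[E]_n, unitary_grp sigma beta h ->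
     GLO v (invmx h *m (invmx beta *m mxadj sigma zeta *m beta *m zeta) *m h) ->
     GLO v (invmx h *m zeta *m h).
Proof.
move=> bu zu hk h hh hM; have h0 : h \in unitmx by case/andP: hh.
case: hk => [[c [hc hz]]|hno]; last first.
  by exfalso; apply: hno; exists h.
apply: (kott_conj hc hz h0 hM).
have d0 : \det zeta != 0 by rewrite -unitfE -unitmxE.
have b0 : \det beta != 0 by rewrite -unitfE -unitmxE.
apply: unitE_half => //.
move: hM; rewrite GLO_det unitE_det_conj // !det_mulmx det_inv /mxadj det_tr.
rewrite -/(mxbar sigma zeta) det_mxbar.
have -> : (\det beta)^-1 * sigma (\det zeta) * \det beta * \det zeta
   = sigma (\det zeta) * \det zeta.
  by field.
by case/andP.
Qed.

Lemma det_mul_rect  n m (C : 'M[E]_(n, m)) (N : 'M[E]_(m, n)) :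
 \det (C *m N) = \sum_(f : {ffun 'I_n -> 'I_m}) (\prod_i C i (f i)) * \det (rowsub f N).
Proof.
rewrite /determinant.
under eq_bigr => s _.
  under eq_bigr => i _ do rewrite mxE.
  rewrite bigA_distr_bigA mulr_sumr.
  under eq_bigr => f _ do rewrite big_split /=.
  over.
rewrite exchange_big /=; apply: eq_bigr => f _.
rewrite mulr_sumr; apply: eq_bigr => s _.
rewrite mulrCA; congr (_ * (_ * _)).
by apply: eq_bigr => i _; rewrite mxE.
Qed.

Lemma descent n (x : 'M[E]_n) (th : E) : GLO v x -> mxbar sigma x *m x = 1%:M ->
  vge v 0 th -> unitE (th - sigma th) ->
  exists k : 'M[E]_n, GLO v k /\ mxbar sigma k *m x = k.
Proof.
move=> hx hxx hth hd.
set L : 'M[E]_n := 1%:M + x.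
set M : 'M[E]_n := th%:M + sigma th *: x.
set N := col_mx L M.
have dl : sigma th - th != 0.
  by case/andP: hd; rewrite -oppr_eq0 opprB.
set c1 := sigma th / (sigma th - th).
set c2 := - (sigma th - th)^-1.
set C := row_mx (c1%:M : 'M[E]_n) (c2%:M : 'M[E]_n).
have hCN : C *m N = 1%:M.
  rewrite /C /N mul_row_col !mul_scalar_mx /L /M.
  apply/matrixP => i j; rewrite !mxE.
  case: (i == j) => /=; rewrite ?mulr1n ?mulr0n /c1 /c2; field => //.
have hxO : mxO v x by case/and3P: hx.
have hL : mxO v L by apply: mxO_add => //; apply: mxO1.
have hM : mxO v M.
  apply: mxO_add; first exact: mxO_scalar.
  by apply: mxO_scale => //; rewrite vge_sigma.
have hNO : forall k j, vge v 0 (N k j).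
  move=> k j; rewrite /N -(splitK k); case: (split k) => k' /=.
    by rewrite col_mxEu; move/mxOP: hL; apply.
  by rewrite col_mxEd; move/mxOP: hM; apply.
have hNx : map_mx sigma N *m x = N.
  rewrite /N map_col_mx mul_col_mx /L /M; congr col_mx.
    by rewrite map_mxD map_mx1 mulmxDl mul1mx hxx addrC.
  rewrite map_mxD map_scalar_mx map_mxZ Hss mulmxDl mul_scalar_mx.
  by rewrite -scalemxAl hxx scalemx1 addrC.
have [f hf] : exists f : {ffun 'I_n -> 'I_(n + n)}, ~~ vge v 1 (\det (rowsub f N)).
  case: (boolP [exists f : {ffun 'I_n -> 'I_(n + n)}, ~~ vge v 1 (\det (rowsub f N))]) => [/existsP//|/existsPn h].
  exfalso; have := det_mul_rect C N; rewrite hCN det1 => h1.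
  have : vge v 1 (1 : E).
    rewrite h1; apply: vge_sum => f _; rewrite -(add0r 1); apply: vgeM.
      by apply: vge_prod => i _; rewrite /C -(splitK (f i));
        case: (split (f i)) => k' /=; rewrite ?row_mxEl ?row_mxEr;
        apply/mxOP; apply: mxO_scalar; rewrite /c1 /c2 ?vgeN;
        [rewrite -(addr0 0); apply: vgeM; rewrite ?vge_sigma //|];
        apply: vge_unit; apply: unitE_inv; rewrite /unitE dl /= -vN opprB;
        by case/andP: hd.
    by have := h f; rewrite negbK.
  by rewrite /vge oner_eq0 v1.
exists (rowsub f N); split.
  have hk : mxO v (rowsub f N) by apply/mxOP => i j; rewrite mxE.
  rewrite GLO_det hk /=.
  have := mxO_det hk; move: hf; rewrite /vge /unitE; case: eqP => //= _.
  rewrite -ltNge => h1 h2; rewrite eq_le h2 andbT; by rewrite -ltzD1.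
apply/matrixP => i j; rewrite !mxE.
have := congr1 (fun A : 'M[E]_(n + n, n) => A (f i) j) hNx; rewrite /= !mxE => <-.
by apply: eq_bigr => l _; rewrite !mxE.
Qed.


Definition cg (x y : E) := vge v 1 (x - y).

Lemma cg_sym x y : cg x y -> cg y x.
Proof. by rewrite /cg -vgeN opprB. Qed.

Lemma cg_trans x y z : cg x y -> cg y z -> cg x z.
Proof. move=> h1 h2; have := vgeD h1 h2; by rewrite /cg addrA subrK. Qed.

Lemma vX x k : x != 0 -> v (x ^+ k) = v x * k%:Z.
Proof.
move=> x0; elim: k => [|k IH]; first by rewrite expr0 v1 mulr0.
rewrite exprS Hmul ?expf_neq0 // IH. lia.
Qed.

Lemma vge1_mul x y : vge v 0 x -> vge v 0 y -> vge v 1 (x * y) -> vge v 1 x || vge v 1 y.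
Proof.
rewrite /vge; case: eqP => [_|/eqP x0] //=; case: eqP => [_|/eqP y0] //=; first by rewrite orbT.
rewrite mulf_eq0 (negPf x0) (negPf y0) /= Hmul //. lia.
Qed.

Lemma vge_X0 x k : vge v 0 x -> vge v 0 (x ^+ k).
Proof. by move=> h; rewrite -(mul0r k%:Z); apply: vge_exp. Qed.

Lemma cgX x y k : vge v 0 x -> vge v 0 y -> cg x y -> cg (x ^+ k) (y ^+ k).
Proof.
move=> hx hy h; rewrite /cg subrXX -(addr0 1); apply: vgeM => //.
apply: vge_sum => i _; rewrite -(addr0 0); apply: vgeM.
  by exact: vge_X0.
exact: vge_X0.
Qed.

Section Residue.
Variable s : seq E.
Hypothesis Hs : forall x, intO v x -> exists2 y, y \in s & intO v y && vge v 1 (x - y).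

Lemma pigeon (a : nat -> E) : (forall i, vge v 0 (a i)) ->
  exists i j, (i < j)%N /\ cg (a i) (a j).
Proof.
move=> ha.
pose P i := fun y => intO v y && vge v 1 (a i - y).
have hP : forall i, (find (P i) s < size s)%N.
  move=> i; rewrite -has_find; apply/hasP; have [y ys hy] := Hs (ha i).
  by exists y.
pose f := fun i : 'I_(size s).+2 => (inord (find (P i) s) : 'I_(size s).+1).
case: (boolP [exists i, exists j, (i != j) && (f i == f j)]); last first.
  move/existsPn => h; exfalso.
  have fi : injective f.
    move=> i j e; apply/eqP; have := h i; move/existsPn/(_ j).
    by rewrite e eqxx andbT negbK.
  by have := @leq_card _ _ f fi; rewrite !card_ord ltnn.
move/existsP => [i /existsP [j /andP [hij /eqP hf]]].
have e : find (P i) s = find (P j) s.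
  have := congr1 val hf; rewrite /f /= !inordK //; apply: ltnW; rewrite ltnS; exact: hP.
have hi : P i (nth 0 s (find (P i) s)).
  by apply: nth_find; rewrite has_find.
have hj : P j (nth 0 s (find (P j) s)).
  by apply: nth_find; rewrite has_find.
rewrite -e in hj; case/andP: hi => _ hi; case/andP: hj => _ hj.
have hc : cg (a i) (a j) by apply: (cg_trans hi); apply: cg_sym.
case: (ltngtP i j) => [lt|lt|eij].
- by exists i, j.
- by exists j, i; split => //; apply: cg_sym.
- by move: hij; rewrite -val_eqE /= eij eqxx.
Qed.

Lemma exists_p : exists p, prime p /\ vge v 1 p%:R.
Proof.
have [i [j [lij hc]]] := pigeon (fun i => vge_nat i).
have e : exists N, (0 < N)%N && vge v 1 N%:R.
  exists (j - i)%N; rewrite subn_gt0 lij /=.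
  by move: hc; rewrite /cg -vgeN opprB -natrB // ltnW.
pose p := ex_minn e.
case: (ex_minnP e) => q /andP [q0 hq] qmin.
exists q; split => //.
apply/primeP; split.
  case: q q0 hq {qmin} => [//|[|q]] // _; by rewrite /vge oner_eq0 v1.
move=> d /dvdnP [e' he'].
have d0 : (0 < d)%N by case: d he' q0 => // ->; rewrite muln0.
have e0 : (0 < e')%N by case: e' he' q0 => // ->; rewrite mul0n.
have dq : (d <= q)%N by rewrite he' leq_pmull.
have eq' : (e' <= q)%N by rewrite he' leq_pmulr.
move: hq; rewrite he' natrM => hq; case/orP: (vge1_mul (vge_nat _) (vge_nat _) hq) => h.
  have := qmin e'; rewrite e0 h => /(_ isT) he.
  have ee : e' = q by apply/eqP; rewrite eqn_leq eq' he.
  apply/orP; left; apply/eqP. rewrite ee in he'. nia.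
have := qmin d; rewrite d0 h => /(_ isT) hd.
have dqe : d = q by apply/eqP; rewrite eqn_leq dq hd.
apply/orP; right; apply/eqP; subst d; nia.
Qed.

End Residue.


Section Prime.
Variable p : nat.
Hypothesis Hp : prime p.
Hypothesis Hpv : vge v 1 p%:R.

Lemma vge_bin i : (0 < i < p)%N -> vge v 1 ('C(p, i))%:R.
Proof.
move=> hi; have /dvdnP [k ->] := prime_dvd_bin Hp hi.
rewrite natrM -(add0r 1); apply: vgeM => //; exact: vge_nat.
Qed.

Lemma mid_term (y d : E) (m : nat) : vge v 0 y -> vge v m%:Z d ->
  vge v (m.+1)%:Z ((y + d) ^+ p - y ^+ p - d ^+ p).
Proof.
move=> hy hd.
have p0 : (0 < p)%N by apply: prime_gt0.
have [p' ep] : exists p', p = p'.+1 by case: p p0 => // p' _; exists p'.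
rewrite ep exprDn big_ord_recr big_ord_recl /= !subnn expr0 subn0 !binn mulr1 mul1r !mulr1n.
have hr : forall a S b : E, a + S + b - a - b = S by move=> *; ring.
rewrite hr.
apply: vge_sum => i _.
rewrite -mulr_natr.
have hi : (0 < (bump 0 i) < p'.+1)%N.
  by rewrite /bump /= add1n ltnS ltn_ord.
have -> : (m.+1)%:Z = (0 + m%:Z * (bump 0 i)%:Z) + 1 - (m%:Z * (bump 0 i)%:Z - m%:Z).
  lia.
apply: (vge_le (N := (0 + m%:Z * (bump 0 i)%:Z) + 1)).
  have : (1 <= bump 0 i)%N by case/andP: hi.
  move=> h1; have : (m%:Z <= m%:Z * (bump 0 i)%:Z). nia. lia.
apply: vgeM; last by rewrite -ep; apply: vge_bin; rewrite ep.
apply: vgeM; first exact: vge_X0.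
by apply: vge_exp.
Qed.



Lemma Lp x (m : nat) : (0 < m)%N -> vge v 0 x -> vge v m%:Z (x - sigma x) ->
  vge v (m.+1)%:Z (x ^+ p - sigma (x ^+ p)).
Proof.
move=> m0 hx hm.
set d := sigma x - x.
have hd : vge v m%:Z d by rewrite /d -vgeN opprB.
rewrite rmorphXn (_ : sigma x = x + d); last by rewrite /d addrC subrK.
have -> : x ^+ p - (x + d) ^+ p = - (((x + d) ^+ p - x ^+ p - d ^+ p) + d ^+ p).
  set a := x ^+ p; set b := (x + d) ^+ p; set c := d ^+ p. ring.
rewrite vgeN; apply: vgeD; first exact: mid_term.
have p2 : (2 <= p)%N by apply: prime_gt1.
apply: (vge_le (N := m%:Z * p%:Z)); first nia.
apply: vge_exp => //; lia.
Qed.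

Lemma frob_inj x y : vge v 0 x -> vge v 0 y -> cg (x ^+ p) (y ^+ p) -> cg x y.
Proof.
move=> hx hy hc.
set d := x - y.
have hd : vge v 0 d by apply: vgeB.
have hm := mid_term (m := 0) hy hd.
rewrite (_ : y + d = x) in hm; last by rewrite /d addrC subrK.
have hdp : vge v 1 (d ^+ p).
  have -> : d ^+ p = (x ^+ p - y ^+ p) - (x ^+ p - y ^+ p - d ^+ p) by ring.
  exact: vgeB.
rewrite /cg -/d; have [->|d0] := eqVneq d 0; first exact: vge0.
move: hdp hd; rewrite /vge expf_eq0 (negPf d0) andbF /= vX //.
have p2 : (2 <= p)%N by apply: prime_gt1.
move=> h1 h0; nia.
Qed.

Lemma back u i d : vge v 0 u -> cg (u ^+ (p ^ i)) (u ^+ (p ^ (i + d))) ->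
  cg u (u ^+ (p ^ d)).
Proof.
move=> hu; elim: i => [|i IH]; first by rewrite expn0 expr1 add0n.
rewrite addSn !expnSr !exprM => h; apply: IH.
by apply: frob_inj => //; apply: vge_X0.
Qed.

Lemma iter_cg u d k : vge v 0 u -> cg u (u ^+ (p ^ d)) -> cg u (u ^+ (p ^ (d * k))).
Proof.
move=> hu hd; elim: k => [|k IH]; first by rewrite muln0 expn0 expr1 /cg subrr vge0.
rewrite mulnS expnD mulnC exprM.
apply: (cg_trans hd); apply: cgX => //; exact: vge_X0.
Qed.

Lemma frob_near (H1 : forall y, vge v 0 y -> vge v 1 (y - sigma y)) x k :
  vge v 0 x -> vge v (k.+1)%:Z (x ^+ (p ^ k) - sigma (x ^+ (p ^ k))).
Proof.
move=> hx; elim: k => [|k IH]; first by rewrite expn0 expr1; apply: H1.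
rewrite expnSr exprM; apply: Lp => //; exact: vge_X0.
Qed.

Section Res2.
Variable s : seq E.
Hypothesis Hs : forall x, intO v x -> exists2 y, y \in s & intO v y && vge v 1 (x - y).
Variable pi : E.
Hypothesis pi0 : pi != 0.
Hypothesis vpi : v pi = 1.
Hypothesis spi : sigma pi = pi.

Lemma period u : vge v 0 u -> exists d, (0 < d)%N /\ cg u (u ^+ (p ^ d)).
Proof.
move=> hu; have [i [j [lij hc]]] := pigeon Hs (fun i => vge_X0 (p ^ i) hu).
exists (j - i)%N; split; first by rewrite subn_gt0.
apply: (back (i := i)) => //; by rewrite subnKC // ltnW.
Qed.

Lemma all_fixed (H1 : forall y, vge v 0 y -> vge v 1 (y - sigma y)) m x :
  vge v 0 x -> vge v (m.+1)%:Z (x - sigma x).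
Proof.
elim: m x => [|m IH] x hx; first exact: H1.
have [d [d0 hd]] := period hx.
set w := x ^+ (p ^ (d * m.+1)).
have hw : vge v (m.+2)%:Z (w - sigma w).
  apply: (vge_le (N := (d * m.+1).+1%:Z)); first nia.
  apply: frob_near => //.
have hcw : cg x w by apply: iter_cg.
set z := (x - w) / pi.
have hz : vge v 0 z.
  rewrite /z -(subrr 1); apply: vgeM => //.
  by rewrite /vge invr_eq0 (negPf pi0) /= vV // vpi.
have hxz : x = w + pi * z by rewrite /z mulrC mulfVK // addrC subrK.
rewrite hxz rmorphD rmorphM spi.
have -> : w + pi * z - (sigma w + pi * sigma z) = (w - sigma w) + pi * (z - sigma z) by ring.
apply: vgeD => //.
have -> : (m.+2)%:Z = 1 + (m.+1)%:Z by lia.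
apply: vgeM; first by rewrite /vge (negPf pi0) vpi.
exact: IH.
Qed.

End Res2.
End Prime.


Lemma theta_exists (s : seq E)
  (Hs : forall x, intO v x -> exists2 y, y \in s & intO v y && vge v 1 (x - y))
  (pi : E) (pi0 : pi != 0) (vpi : v pi = 1) (spi : sigma pi = pi)
  (hnt : exists x, sigma x != x) :
  exists th, vge v 0 th /\ unitE (th - sigma th).
Proof.
have [p [Hp Hpv]] := exists_p Hs.
case: (classic (exists th, vge v 0 th /\ unitE (th - sigma th))) => // hn.
exfalso.
have H1 : forall y, vge v 0 y -> vge v 1 (y - sigma y).
  move=> y hy; case: (boolP (vge v 1 (y - sigma y))) => // hn1; exfalso; apply: hn.
  exists y; split => //.
  have h0 : vge v 0 (y - sigma y) by apply: vgeB => //; rewrite vge_sigma.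
  move: hn1 h0; rewrite /vge /unitE negb_or => /andP [yn h1] h0.
  rewrite yn /=; rewrite (negPf yn) /= in h0; apply/eqP; move: h1 h0; lia.
have [y [hy hsy]] : exists y, vge v 0 y /\ sigma y != y.
  case: hnt => x hx; case: (boolP (vge v 0 x)) => hx0; first by exists x.
  exists x^-1; split.
    move: hx0; rewrite /vge negb_or => /andP [x0 h].
    by rewrite invr_eq0 (negPf x0) /= vV //; lia.
  by rewrite fmorphV; apply: contra hx => /eqP /invr_inj ->.
set D := y - sigma y.
have D0 : D != 0 by rewrite /D subr_eq0 eq_sym.
have hD : vge v 0 D by apply: vgeB => //; rewrite vge_sigma.
have := all_fixed Hp Hpv Hs pi0 vpi spi H1 `|v D|%N hy.
rewrite -/D /vge (negPf D0) /=; move: hD; rewrite /vge (negPf D0) /=.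
lia.
Qed.

Lemma part2 n (gamma : 'M[E]_n) (th : E) : vge v 0 th -> unitE (th - sigma th) ->
  gamma \in unitmx -> kottwitz sigma v gamma ->
  forall g : 'M[E]_n, g \in unitmx ->
     GLO v (invmx g *m gamma *m mxbar sigma g) ->
     exists a k : 'M[E]_n, [/\ GLF sigma a, GLO v k & g = a *m k].
Proof.
move=> hth hd gu hk g g0 ht.
set t := invmx g *m gamma *m mxbar sigma g.
set gb := mxbar sigma g.
have gb0 : gb \in unitmx by rewrite unitmx_bar.
have t0 : t \in unitmx by case/and3P: ht.
have hbt : mxbar sigma t = invmx gb *m mxbar sigma gamma *m g.
  by rewrite /t !mxbarM mxbarV mxbarK.
have hM : GLO v (invmx gb *m (mxbar sigma gamma *m gamma) *m gb).
  have -> : invmx gb *m (mxbar sigma gamma *m gamma) *m gb = mxbar sigma t *m t.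
    by rewrite hbt /t !mulmxA mulmxK.
  by apply: GLO_mul => //; rewrite GLO_bar.
have hG := part1 gu hk gb0 hM.
set x := invmx gb *m g.
have hxt : x *m t = invmx gb *m gamma *m gb.
  by rewrite /x /t !mulmxA mulmxK.
have hx : GLO v x.
  have -> : x = (invmx gb *m gamma *m gb) *m invmx t by rewrite -hxt mulmxK.
  by apply: GLO_mul => //; apply: GLO_inv.
have hxx : mxbar sigma x *m x = 1%:M.
  by rewrite /x mxbarM mxbarV mxbarK /gb mulmxA mulmxK // mulVmx.
have [k [hk0 hkx]] := descent hx hxx hth hd.
have k0 : k \in unitmx by case/and3P: hk0.
have kb0 : mxbar sigma k \in unitmx by rewrite unitmx_bar.
have x0 : x \in unitmx by case/and3P: hx.
exists (g *m invmx k), k; split => //; last by rewrite mulmxKV.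
rewrite /GLF unitmx_mul g0 unitmx_inv k0 /=.
have hi : invmx (mxbar sigma k) = x *m invmx k.
  have e : mxbar sigma k *m (x *m invmx k) = 1%:M by rewrite mulmxA hkx mulmxV.
  by rewrite -[LHS]mulmx1 -e mulmxA mulVmx // mul1mx.
by rewrite mxbarM mxbarV hi /x mulmxA -/gb mulmxA mulmxV // mul1mx.
Qed.

Lemma main_sec n (beta gamma zeta : 'M[E]_n) (s : seq E)
  (Hs : forall x, intO v x -> exists2 y, y \in s & intO v y && vge v 1 (x - y))
  (pi : E) (pi0 : pi != 0) (vpi : v pi = 1) (spi : sigma pi = pi)
  (hnt : exists x, sigma x != x) :
  beta \in unitmx ->
  gamma \in unitmx -> kottwitz sigma v gamma ->
  zeta \in unitmx -> kottwitz_wrt sigma v beta zeta ->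
  (forall g : 'M[E]_n, g \in unitmx ->
     GLO v (invmx g *m (mxbar sigma gamma *m gamma) *m g) ->
     GLO v (invmx g *m gamma *m g))
  /\ (forall g : 'M[E]_n, g \in unitmx ->
     GLO v (invmx g *m gamma *m mxbar sigma g) ->
     exists a k : 'M[E]_n, [/\ GLF sigma a, GLO v k & g = a *m k])
  /\ (forall h : 'M[E]_n, unitary_grp sigma beta h ->
     GLO v (invmx h *m (invmx beta *m mxadj sigma zeta *m beta *m zeta) *m h) ->
     GLO v (invmx h *m zeta *m h)).
Proof.
move=> bu gu hk zu hkz; split; first exact: part1.
split; last exact: part3.
have [th [hth hd]] := theta_exists Hs pi0 vpi spi hnt.
exact: part2 hth hd gu hk.
Qed.

End Val.

Unset Implicit Arguments.

Theorem mainTheorem8 (E : fieldType) (sigma : {rmorphism E -> E})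
    (v : E -> int) (n : nat) (beta gamma zeta : 'M[E]_n) :
  unram_quad_local sigma v ->
  beta \in unitmx -> mxadj sigma beta = - beta ->
  gamma \in unitmx -> normal_mx sigma gamma -> kottwitz sigma v gamma ->
  regular_semisimple (mxbar sigma gamma *m gamma) ->
  zeta \in unitmx -> kottwitz_wrt sigma v beta zeta ->
  (forall g : 'M[E]_n, g \in unitmx ->
     GLO v (invmx g *m (mxbar sigma gamma *m gamma) *m g) ->
     GLO v (invmx g *m gamma *m g))
  /\ (forall g : 'M[E]_n, g \in unitmx ->
     GLO v (invmx g *m gamma *m mxbar sigma g) ->
     exists a k : 'M[E]_n, [/\ GLF sigma a, GLO v k & g = a *m k])
  /\ (forall h : 'M[E]_n, unitary_grp sigma beta h ->
     GLO v (invmx h *m (invmx beta *m mxadj sigma zeta *m beta *m zeta) *m h) ->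
     GLO v (invmx h *m zeta *m h)).
Proof.
move=> [[hchar Hmul Hadd Hcomp Hs] [Hss Hnt Hvs [pi [pi0 vpi spi]]]] bu _ gu _ hk _ zu hkz.
case: Hs => s Hs.
exact: (main_sec Hmul Hadd Hss Hvs Hs pi0 vpi spi Hnt bu gu hk zu hkz).
Qed.
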